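(* Let $p,q,r,s$ be arbitrary integers and put $$x_1=pq(r^2-s^2)+q^2r^2,\quad x_2=-(p^2s(r+s)-q^2rs),\quad x_3=p^2r(r+s)+pqr^2-q^2rs,$$ $$x_4=-(p^2r(r+s)+pq(r^2-s^2)),\quad x_5=p^2s(r+s)-pqr^2-q^2r^2.$$ Let $$B=\begin{bmatrix} x_2 & -x_3 & 1\\ -x_4 & x_5 & 1\\ 1 & 1 & 0\end{bmatrix}.$$ Then $\det B = x_1$ and $\det(B^{(3)}) = x_1^3$.
   Context: For a matrix $M=(m_{ij})$, $M^{(3)}$ denotes the matrix $(m_{ij}^3)$ obtained by replacing each entry by its cube. *)

(* Defs.v *)
From mathcomp Require Import all_boot all_order all_algebra.
Set Implicit Arguments. Unset Strict Implicit. Unset Printing Implicit Defensive.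
Import GRing.Theory Num.Theory.
Local Open Scope ring_scope.

Definition cube_mx (R : pzRingType) (m n : nat) (M : 'M[R]_(m, n)) : 'M[R]_(m, n) :=
  map_mx (fun a => a ^+ 3) M.

Section X.
Variables p q r s : int.
Definition x1 : int := p * q * (r ^+ 2 - s ^+ 2) + q ^+ 2 * r ^+ 2.
Definition x2 : int := - (p ^+ 2 * s * (r + s) - q ^+ 2 * r * s).
Definition x3 : int := p ^+ 2 * r * (r + s) + p * q * r ^+ 2 - q ^+ 2 * r * s.
Definition x4 : int := - (p ^+ 2 * r * (r + s) + p * q * (r ^+ 2 - s ^+ 2)).
Definition x5 : int := p ^+ 2 * s * (r + s) - p * q * r ^+ 2 - q ^+ 2 * r ^+ 2.
End X.

Definition Bmx (p q r s : int) : 'M[int]_3 :=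
  \matrix_(i < 3, j < 3)
    nth 0 (nth [::] [:: [:: x2 p q r s; - x3 p q r s; 1];
                       [:: - x4 p q r s; x5 p q r s; 1];
                       [:: 1; 1; 0]] i) j.

(* Main.v *)
Require Import Defs.
From mathcomp Require Import all_boot all_order all_algebra.
From mathcomp Require Import ring.
Local Open Scope ring_scope.
Import GRing.Theory.

Lemma det33 (M : 'M[int]_3) : \det M =
  M 0 0 * M 1 1 * M 2 2 + M 0 1 * M 1 2 * M 2 0 + M 0 2 * M 1 0 * M 2 1
  - M 0 2 * M 1 1 * M 2 0 - M 0 0 * M 1 2 * M 2 1 - M 0 1 * M 1 0 * M 2 2.
Proof.
rewrite (expand_det_row _ 0) !big_ord_recl big_ord0 /cofactor.
rewrite !(expand_det_row _ 0) !big_ord_recl !big_ord0 /cofactor.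
rewrite !det_mx11 !mxE /=.
have E1 : (lift 0 0 : 'I_3) = 1 by apply/val_inj.
have E2 : (lift ord0 ord0 : 'I_3) = 1 by apply/val_inj.
have E3 : (lift 0 (lift 0 0) : 'I_3) = 2 by apply/val_inj.
have E4 : (lift ord0 (lift ord0 0) : 'I_3) = 2 by apply/val_inj.
have E5 : (lift ord0 (lift ord0 ord0) : 'I_3) = 2 by apply/val_inj.
have E6 : (lift ord0 (lift (lift ord0 ord0) 0) : 'I_3) = 1 by apply/val_inj.
have E7 : (lift (lift ord0 ord0) ord0 : 'I_3) = 0 by apply/val_inj.
have E8 : (lift (lift ord0 ord0) (lift ord0 0) : 'I_3) = 2 by apply/val_inj.
have E9 : (lift (lift ord0 ord0) (lift ord0 ord0) : 'I_3) = 2 by apply/val_inj.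
have E10 : (lift (lift ord0 ord0) (lift (lift ord0 ord0) 0) : 'I_3) = 0 by apply/val_inj.
have E11 : (lift (lift ord0 (lift ord0 ord0)) ord0 : 'I_3) = 0 by apply/val_inj.
have E12 : (lift (lift ord0 (lift ord0 ord0)) (lift ord0 0) : 'I_3) = 1 by apply/val_inj.
have E13 : (lift (lift ord0 (lift ord0 ord0)) (lift ord0 ord0) : 'I_3) = 1 by apply/val_inj.
have E14 : (lift (lift ord0 (lift ord0 ord0)) (lift (lift ord0 ord0) 0) : 'I_3) = 0 by apply/val_inj.
have E0 : (ord0 : 'I_3) = 0 by apply/val_inj.
rewrite ?E14 ?E13 ?E12 ?E11 ?E10 ?E9 ?E8 ?E7 ?E6 ?E5 ?E4 ?E3 ?E2 ?E1 ?E0.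
ring.
Qed.

Theorem mainTheorem3 (p q r s : int) :
  \det (Bmx p q r s) = x1 p q r s /\
  \det (cube_mx (Bmx p q r s)) = (x1 p q r s) ^+ 3.
Proof.
rewrite /cube_mx !det33 !mxE /= /x1 /x2 /x3 /x4 /x5; split; ring.
Qed.
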